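(* Let $G=(V,E)$ be a finite, connected, simple graph with generic weights $(w_x)_{x\in V\cup E}$ and ground state $M$. Let $v\in V$ and $e\in E$. If $e=(u,v)$ is inaccessible, then $e\notin M$. If $O(v)<0$, then $v\in M$.
   Context: A matching of $G$ is a set $M\subset V\cup E$ such that every vertex either belongs to $M$ or is an endpoint of exactly one edge of $M$, but not both; $H(M)=\sum_{x\in M}w_x$ and the ground state is the matching of minimal weight. Weights are generic if no nontrivial integer combination of finitely many weights vanishes. The optimality of a vertex $v$ is $O(v)=\max_{u\sim v}(w_u+w_v-w_{(u,v)})$, the maximum over neighbours $u$ of $v$. An edge $e=(u,v)$ is inaccessible if $w_e>w_u+w_v$. *)

(* Defs.v *)
From HB Require Import structures.
From mathcomp Require Import all_boot all_order all_algebra.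
Set Implicit Arguments. Unset Strict Implicit. Unset Printing Implicit Defensive.
Import Order.TTheory GRing.Theory Num.Theory.
Local Open Scope ring_scope.

Definition simple_graph (T : finType) (adj : rel T) : Prop :=
  symmetric adj /\ irreflexive adj.

Definition connected_graph (T : finType) (adj : rel T) : Prop :=
  forall u v : T, connect adj u v.

Definition edges (T : finType) (adj : rel T) : {set {set T}} :=
  [set e : {set T} | [exists u, exists v, adj u v && (e == [set u; v])]].

(* A matching M ⊂ V ∪ E, given by its vertex part MV and edge part ME:
   every vertex either belongs to M or is an endpoint of exactly one edge of
   M, but not both. *)
Definition is_matching (T : finType) (adj : rel T)
    (MV : {set T}) (ME : {set {set T}}) : Prop :=
  ME \subset edges adj /\
  forall v : T, ((v \in MV) + #|[set e in ME | v \in e]|)%N = 1%N.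

Definition energy (R : numDomainType) (T : finType)
    (wV : T -> R) (wE : {set T} -> R) (MV : {set T}) (ME : {set {set T}}) : R :=
  \sum_(v in MV) wV v + \sum_(e in ME) wE e.

Definition ground_state (R : numDomainType) (T : finType) (adj : rel T)
    (wV : T -> R) (wE : {set T} -> R) (MV : {set T}) (ME : {set {set T}}) : Prop :=
  is_matching adj MV ME /\
  forall MV' ME', is_matching adj MV' ME' -> energy wV wE MV ME <= energy wV wE MV' ME'.

Definition generic (R : numDomainType) (T : finType) (adj : rel T)
    (wV : T -> R) (wE : {set T} -> R) : Prop :=
  forall (cV : T -> int) (cE : {set T} -> int),
    \sum_(v : T) wV v *~ cV v + \sum_(e in edges adj) wE e *~ cE e = 0 ->
    (forall v, cV v = 0) /\ (forall e, e \in edges adj -> cE e = 0).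

(* Optimality O(v) = max_{u ~ v} (w_u + w_v - w_{(u,v)}).
   None encodes the maximum over an empty set (isolated vertex), i.e. -oo. *)
Definition optimality (R : realDomainType) (T : finType) (adj : rel T)
    (wV : T -> R) (wE : {set T} -> R) (v : T) : option R :=
  let f := fun u => wV u + wV v - wE [set u; v] in
  if [pick u | adj v u] is Some u0 then
    Some (\big[Num.max/f u0]_(u | adj v u) f u)
  else None.

Definition optimality_neg (R : realDomainType) (T : finType) (adj : rel T)
    (wV : T -> R) (wE : {set T} -> R) (v : T) : Prop :=
  match optimality adj wV wE v with Some o => o < 0 | None => True end.

Definition inaccessible (R : numDomainType) (T : finType) (adj : rel T)
    (wV : T -> R) (wE : {set T} -> R) (u v : T) : Prop :=
  adj u v /\ wV u + wV v < wE [set u; v].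

(* Main.v *)
Require Import Defs.
From HB Require Import structures.
From mathcomp Require Import all_boot all_order all_algebra.
From mathcomp Require Import lra.
Import Order.TTheory GRing.Theory Num.Theory.
Local Open Scope ring_scope.

Lemma part1 (R : realFieldType) (T : finType) (adj : rel T)
    (wV : T -> R) (wE : {set T} -> R) (MV : {set T}) (ME : {set {set T}}) :
  simple_graph adj ->
  ground_state adj wV wE MV ME ->
  (forall u v : T, inaccessible adj wV wE u v -> [set u; v] \notin ME).
Proof.
move=> [Hsym Hirr] [[HsubE Hcnt] Hmin] u v [Huv Hlt].
apply/negP => He.
set e := [set u; v] in Hlt He.
have uv : u != v by apply/eqP => E; move: Huv; rewrite E Hirr.
have Hin : forall x, x \in e -> x \notin MV /\ [set f in ME | x \in f] = [set e].
  move=> x xe.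
  have := Hcnt x.
  have : e \in [set f in ME | x \in f] by rewrite inE He xe.
  move=> Hm Hc.
  have Hpos : (0 < #|[set f in ME | x \in f]|)%N by apply/card_gt0P; exists e.
  case: (boolP (x \in MV)) Hc => Hx /= Hc.
    by exfalso; move: Hc Hpos; rewrite add1n => -[->].
  split=> //.
  move: Hc; rewrite add0n => /eqP /cards1P [f Hf].
  by move: Hm; rewrite Hf inE => /eqP ->.
have [uMV uE] : u \notin MV /\ [set f in ME | u \in f] = [set e] by apply: Hin; rewrite !inE eqxx.
have [vMV vE] : v \notin MV /\ [set f in ME | v \in f] = [set e] by apply: Hin; rewrite !inE eqxx orbT.
set MV' := MV :|: e.
set ME' := ME :\ e.
have Hmat : is_matching adj MV' ME'.
  split.
    by apply: subset_trans HsubE; apply: subsetDl.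
  move=> x.
  case: (boolP (x \in e)) => xe.
    have [xMV xE] := Hin x xe.
    have -> : [set f in ME' | x \in f] = set0.
      apply/setP => f; rewrite !inE.
      case: (boolP (f \in ME)) => fME; last by rewrite !andbF.
      case: (boolP (x \in f)) => xf; last by rewrite andbF.
      have : f \in [set f in ME | x \in f] by rewrite inE fME xf.
      by rewrite xE inE => ->.
    by rewrite cards0 /MV' inE xe orbT.
  have -> : [set f in ME' | x \in f] = [set f in ME | x \in f].
    apply/setP => f; rewrite !inE.
    case: (boolP (f == e)) => [/eqP -> | _] /=; last by [].
    by rewrite (negbTE xe) !andbF.
  by rewrite /MV' inE (negbTE xe) orbF Hcnt.
have := Hmin _ _ Hmat.
rewrite /energy.
have dis : [disjoint MV & e].
  rewrite -setI_eq0; apply/eqP/setP => x; rewrite !inE.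
  by apply/negP => /andP [xM /orP [] /eqP Ex]; move: xM; rewrite Ex ?(negbTE uMV) ?(negbTE vMV).
have EMV : \sum_(i in MV :|: e) wV i = \sum_(i in MV) wV i + (wV u + wV v).
  rewrite (eq_bigl [predU MV & e]); last by move=> x; rewrite !inE.
  by rewrite (bigU _ _ _ dis) /e big_setU1 /= ?inE // big_set1.
rewrite /MV' EMV.
rewrite /ME' (big_setD1 _ He) /=.
set A := \sum_(i in MV) wV i.
set B := \sum_(i in ME :\ e) wE i.
move: Hlt; rewrite -/e => Hlt.
move=> H.
have : wE e + B <= wV u + wV v + B by move: H; rewrite -!addrA [A + _]addrC => H; lra.
lra.
Qed.
Theorem lemma2p5 (R : realFieldType) (T : finType) (adj : rel T)
    (wV : T -> R) (wE : {set T} -> R) (MV : {set T}) (ME : {set {set T}}) :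
  simple_graph adj -> connected_graph adj ->
  generic adj wV wE ->
  ground_state adj wV wE MV ME ->
  (forall u v : T, inaccessible adj wV wE u v -> [set u; v] \notin ME) /\
  (forall v : T, optimality_neg adj wV wE v -> v \in MV).
Proof.
move=> Hs Hc Hg Hgs.
have P1 := @part1 R T adj wV wE MV ME Hs Hgs.
split=> // v Hneg.
case: (boolP (v \in MV)) => // vMV; exfalso.
have [Hsym Hirr] := Hs.
have [[HsubE Hcnt] _] := Hgs.
have := Hcnt v; rewrite (negbTE vMV) add0n => /eqP /cards1P [e He].
have : e \in [set f in ME | v \in f] by rewrite He inE.
rewrite inE => /andP [eME ve].
have := subsetP HsubE _ eME; rewrite inE => /existsP [a /existsP [b /andP [Hab /eqP Ee]]].
have [u [Hvu Eu]] : exists u, adj v u /\ e = [set u; v].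
  move: ve; rewrite Ee !inE => /orP [] /eqP ->.
    by exists b; split => //; rewrite setUC.
  by exists a; split => //; rewrite Hsym.
have Hlt : wV u + wV v - wE [set u; v] < 0.
  move: Hneg; rewrite /optimality_neg /optimality.
  case: pickP => [u0 Hu0 | Hn]; last by move: (Hn u); rewrite Hvu.
  apply: le_lt_trans.
  exact: (le_bigmax_cond _ (fun u => wV u + wV v - wE [set u; v]) Hvu).
apply: (negP (P1 u v _)); last by rewrite -Eu.
split; first by rewrite Hsym.
by rewrite -subr_lt0.
Qed.
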